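(* Let $A=\langle a\mid a^k=1\rangle$ be a cyclic group of order $k$, let $r$ be an integer with $1\le r<k$ and $\gcd(r,k)=1$, let $\varphi$ be the automorphism of $A$ given by $a\mapsto a^r$, let $m$ be the multiplicative order of $r$ modulo $k$, and let $n$ be a positive multiple of $m$. Let $G=A\langle c\rangle$ be any finite group containing $A$ and an element $c$ of order $n$ with $A\cap\langle c\rangle=\{1\}$ and $G=A\langle c\rangle$, such that the skew-morphism of $A$ determined by $c$ (namely the map $\psi:A\to A$ defined by $cx=\psi(x)c^{j}$ with $\psi(x)\in A$, $j\in\mathbb{Z}_n$) equals $\varphi$. Then $G$ has a presentation \[ G=\langle a,c\mid a^k=c^n=1,\ c^ma=ac^{mt},\ ca=a^rc^{1+ms}\rangle, \] where $s,t\in\mathbb{Z}_{n/m}$ satisfy: (a) $t^{r-1}\equiv1\pmod{n/m}$; (b) $s\sum_{i=1}^{k}t^{i-1}\equiv0\pmod{n/m}$; (c) $s\sum_{i=1}^{m}\big(\sum_{j=1}^{r}t^{j-1}\big)^{i-1}\equiv t-1\pmod{n/m}$.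
   Context: A skew-morphism of a finite group $A$ is a permutation $\varphi$ of $A$ with $\varphi(1_A)=1_A$ for which there is a function $\pi:A\to\mathbb{Z}_m$ ($m$ the order of $\varphi$) with $\varphi(xy)=\varphi(x)\varphi^{\pi(x)}(y)$ for all $x,y\in A$. If $G=A\langle c\rangle$ with $A\cap\langle c\rangle=\{1\}$ and $|c|=n$, then for each $x\in A$ there are unique $\psi(x)\in A$ and $j\in\mathbb{Z}_n$ with $cx=\psi(x)c^j$, and $\psi$ is a skew-morphism of $A$ (the skew-morphism determined by $c$). *)

(* Defs.v *)
From mathcomp Require Import all_boot all_fingroup.
Set Implicit Arguments.
Unset Strict Implicit.
Unset Printing Implicit Defensive.

Definition is_mult_order (k r m : nat) : Prop :=
  0 < m /\ r ^ m = 1 %[mod k] /\ (forall i, 0 < i < m -> r ^ i <> 1 %[mod k]).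

(* Main.v *)
Require Import Defs.
From mathcomp Require Import all_boot all_fingroup all_solvable.
From mathcomp Require Import zify ring.
Set Implicit Arguments. Unset Strict Implicit. Unset Printing Implicit Defensive.
Local Open Scope group_scope.
Definition Sg (t i : nat) := (\sum_(0 <= l < i) t ^ l)%N.

Lemma SgS t i : Sg t i.+1 = (1 + t * Sg t i)%N.
Proof.
rewrite /Sg big_nat_recl // expn0; congr (_ + _)%N.
rewrite big_distrr /=; apply: eq_bigr => l _; by rewrite expnS.
Qed.

Lemma SgD t i j : Sg t (i + j) = (Sg t i + t ^ i * Sg t j)%N.
Proof.
elim: j => [|j IH]; first by rewrite addn0 {3}/Sg big_geq // muln0 addn0.
rewrite addnS /Sg big_nat_recr ?leq_addr //= -/(Sg t (i + j)) IH.
rewrite /Sg [in RHS]big_nat_recr //= mulnDr addnA expnD.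
by [].
Qed.

Fixpoint Fe (r m s t j i : nat) : nat :=
  if j is j'.+1 then (Fe r m s t j' (r * i) + (1 + m * s * Sg t i))%N else 0%N.

Section Gen.
Variables (gT : finGroupType) (x y : gT) (r m s t : nat).
Hypothesis R1 : y * x = x ^+ r * y ^+ (1 + m * s).
Hypothesis R2 : y ^+ m * x = x * y ^+ (m * t).

Lemma L1 q : y ^+ (m * q) * x = x * y ^+ (m * t * q).
Proof.
elim: q => [|q IH]; first by rewrite !muln0 !expg0 mul1g mulg1.
by rewrite mulnS expgD -mulgA IH mulgA R2 -mulgA -expgD mulnS.
Qed.

Lemma L2 i : y * x ^+ i = x ^+ (r * i) * y ^+ (1 + m * s * Sg t i).
Proof.
elim: i => [|i IH]; first by rewrite /Sg big_geq // !muln0 addn0 !expg0 mulg1 mul1g.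
rewrite expgSr mulgA IH -mulgA expgD -mulgA -mulnA L1 expg1 (mulgA y) R1 -!mulgA -expgD mulgA -expgD mulnS.
rewrite SgS addnC; congr (_ * _ ^+ _); rewrite mulnDr muln1; ring.
Qed.

Lemma L3 j i : y ^+ j * x ^+ i = x ^+ (r ^ j * i) * y ^+ (Fe r m s t j i).
Proof.
elim: j i => [|j IH] i; first by rewrite expg0 mul1g expn0 mul1n /= mulg1.
rewrite expgSr -mulgA L2 mulgA IH -mulgA -expgD /=.
by rewrite expnS mulnCA mulnA.
Qed.

Lemma L4 q i : y ^+ (m * q) * x ^+ i = x ^+ i * y ^+ (m * q * t ^ i).
Proof.
elim: i => [|i IH]; first by rewrite expn0 muln1 expg0 mulg1 mul1g.
rewrite expgSr mulgA IH -mulgA -mulnA L1 mulgA; congr (_ * _ ^+ _).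
rewrite expnS; ring.
Qed.
End Gen.
Local Close Scope group_scope.
Lemma Sg0 t : Sg t 0 = 0. Proof. by rewrite /Sg big_geq. Qed.
Lemma Sg1 t : Sg t 1 = 1. Proof. by rewrite /Sg big_nat1. Qed.

Section ModN.
Variable N : nat.
Lemma modD a a' b b' : a = a' %[mod N] -> b = b' %[mod N] -> a + b = a' + b' %[mod N].
Proof. by move=> Ha Hb; rewrite -modnDm Ha Hb modnDm. Qed.
Lemma modM a a' b b' : a = a' %[mod N] -> b = b' %[mod N] -> a * b = a' * b' %[mod N].
Proof. by move=> Ha Hb; rewrite -modnMm Ha Hb modnMm. Qed.
Lemma modX a a' e : a = a' %[mod N] -> a ^ e = a' ^ e %[mod N].
Proof. by move=> Ha; rewrite -modnXm Ha modnXm. Qed.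
Lemma modsum (I : Type) (s : seq I) (F G : I -> nat) :
  (forall i, F i = G i %[mod N]) -> \sum_(i <- s) F i = \sum_(i <- s) G i %[mod N].
Proof.
move=> H; apply: (big_ind2 (fun x y => x = y %[mod N])) => //.
by move=> ? ? ? ? ; apply: modD.
Qed.

Lemma modA t k r : 0 < k -> 0 < r -> t ^ k = 1 %[mod N] -> t ^ r = t %[mod N] ->
  t ^ r.-1 = 1 %[mod N].
Proof.
move=> k0 r0 hk hr; move: k0 hk r0 hr.
case: k => // k _ hk; case: r => // r _ hr /=.
have e1 : t ^ r = t ^ k.+1 * t ^ r %[mod N] by rewrite -modnMml hk modnMml mul1n.
have e2 : t ^ k.+1 * t ^ r = t ^ k * t ^ r.+1 by rewrite -!expnD addSn addnS.
by rewrite e1 e2 -modnMmr hr modnMmr -expnSr.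
Qed.

Variable t : nat.

Lemma SgM r x : t ^ r = t %[mod N] -> Sg t (r * x) = Sg t r * Sg t x %[mod N].
Proof.
move=> hr; elim: x => [|x IH]; first by rewrite muln0 !Sg0 muln0.
rewrite mulnS addnC SgD.
have -> : Sg t x.+1 = Sg t x + t ^ x by rewrite -addn1 SgD Sg1 muln1.
have ht : t ^ (r * x) = t ^ x %[mod N] by rewrite expnM; apply: modX.
rewrite (modD IH (modM ht (erefl (Sg t r %% N)))).
by congr (_ %% N); ring.
Qed.

Lemma SgX r u : t ^ r = t %[mod N] -> Sg t (r ^ u) = Sg t r ^ u %[mod N].
Proof.
move=> hr; elim: u => [|u IH]; first by rewrite Sg1.
by rewrite expnS (SgM _ hr) (modM (erefl _) IH) expnS.
Qed.
End ModN.

Lemma FeE r m s t j i : Fe r m s t j i = j + m * s * \sum_(0 <= u < j) Sg t (r ^ u * i).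
Proof.
elim: j i => [|j IH] i; first by rewrite big_geq // muln0.
rewrite /= IH big_nat_recl // expn0 mul1n.
have -> : \sum_(0 <= u < j) Sg t (r ^ u * (r * i)) = \sum_(0 <= u < j) Sg t (r ^ u.+1 * i).
  by apply: eq_bigr => u _; rewrite expnSr mulnA.
ring.
Qed.
Local Open Scope group_scope.
Lemma mult_order_dvd k r m e : is_mult_order k r m -> (r ^ e = 1 %[mod k])%N -> (m %| e)%N.
Proof.
case=> m0 [hm hmin] he.
have hq : (r ^ (e %% m) = 1 %[mod k])%N.
  move: he; rewrite {1}(divn_eq e m) expnD (mulnC (e %/ m)) expnM.
  by rewrite -modnMml -modnXm hm modnXm exp1n modnMml mul1n.
rewrite /dvdn; apply/eqP.
case: (posnP (e %% m)) => // hpos; exfalso; apply: (hmin (e %% m)) => //.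
by rewrite hpos ltn_pmod.
Qed.

Lemma key_mod k r m n j : is_mult_order k r m -> coprime r k -> (0 < r)%N -> (0 < n)%N -> (m %| n)%N ->
  (r ^ j = r %[mod k])%N -> (j = 1 %[mod m])%N.
Proof.
move=> hord hco r0 n0 hmn hj.
have hm := hord; case: hm => m0 [hm _].
have hn : (r ^ n = 1 %[mod k])%N.
  by rewrite -(divnK hmn) mulnC expnM -modnXm hm modnXm exp1n.
have hjn : (0 < j + n)%N by rewrite addn_gt0 n0 orbT.
have h1 : (r ^ (j + n).-1 = 1 %[mod k])%N.
  have : (r * r ^ (j + n).-1 = r * 1 %[mod k])%N.
    rewrite -expnS prednK // expnD -modnMmr hn modnMmr !muln1 //.
  have hX : (1 <= r ^ (j + n).-1)%N by rewrite expn_gt0 r0.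
  move/eqP; rewrite eqn_mod_dvd ?leq_mul2l ?hX ?orbT // -mulnBr Gauss_dvdr; last first.
    by rewrite coprime_sym.
  by move=> hd; apply/eqP; rewrite eqn_mod_dvd.
have hd := mult_order_dvd hord h1.
have e1 : (j %% m = (j + n) %% m)%N by rewrite -(divnK hmn) addnC modnMDl.
by rewrite e1 -(prednK hjn) -addn1 -modnDml (eqP hd).
Qed.

Section InG.
Variables (gT : finGroupType) (a c : gT) (k r m n : nat).
Hypotheses (Hr : (1 <= r < k)%N) (Hco : coprime r k) (Hord : is_mult_order k r m)
  (Hn : (0 < n)%N) (Hmn : (m %| n)%N) (Ha : #[a] = k) (Hc : #[c] = n)
  (HI : <[a]> :&: <[c]> = 1)
  (Hsk : forall i : nat, exists j : nat, c * a ^+ i = a ^+ (r * i) * c ^+ j).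

Lemma udec i j i' j' : a ^+ i * c ^+ j = a ^+ i' * c ^+ j' -> a ^+ i = a ^+ i' /\ c ^+ j = c ^+ j'.
Proof.
move=> E.
have E2 : (a ^+ i')^-1 * a ^+ i = c ^+ j' * (c ^+ j)^-1.
  by rewrite -[a ^+ i](mulgK (c ^+ j)) E -mulgA mulKg.
have : (a ^+ i')^-1 * a ^+ i \in <[a]> :&: <[c]>.
  by rewrite inE {2}E2 !groupM ?groupV ?mem_cycle.
rewrite HI inE => /eqP h1; rewrite h1 in E2; split.
  by rewrite -[a ^+ i](mulKVg (a ^+ i')) h1 mulg1.
by rewrite -[c ^+ j'](mulgKV (c ^+ j)) -E2 mul1g.
Qed.

Lemma r0 : (0 < r)%N. Proof. by case/andP: Hr. Qed.

Lemma step1 i : exists j, c * a ^+ i = a ^+ (r * i) * c ^+ j /\ (j = 1 %[mod m])%N.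
Proof.
have cpow u i' : exists e, c ^+ u * a ^+ i' = a ^+ (r ^ u * i') * c ^+ e.
  elim: u i' => [|u IH] i'; first by exists 0%N; rewrite expg0 mul1g mulg1 expn0 mul1n.
  case: (Hsk i') => j hj; case: (IH (r * i')%N) => e he.
  exists (e + j)%N; rewrite expgSr -mulgA hj mulgA he -mulgA -expgD.
  by rewrite expnSr mulnA.
case: (Hsk i) => j hj; exists j; split => //.
apply: (key_mod Hord Hco r0 Hn Hmn).
case: (Hsk i.+1) => j2 h2.
case: (cpow j 1%N) => e he.
have : a ^+ (r * i + r ^ j * 1) * c ^+ e = a ^+ (r * i.+1) * c ^+ j2.
  by rewrite -h2 expgSr mulgA hj -mulgA he mulgA -expgD.
case/udec => /eqP; rewrite eq_expg_mod_order Ha muln1 mulnS addnC.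
by rewrite eqn_modDr => /eqP.
Qed.

Lemma cpow u i : exists e, c ^+ u * a ^+ i = a ^+ (r ^ u * i) * c ^+ e /\ (e = u %[mod m])%N.
Proof.
elim: u i => [|u IH] i; first by exists 0%N; rewrite expg0 mul1g mulg1 expn0 mul1n.
case: (step1 i) => j [hj hjm]; case: (IH (r * i)%N) => e [he hem].
exists (e + j)%N; split; last by rewrite -addn1; apply: modD.
rewrite expgSr -mulgA hj mulgA he -mulgA -expgD.
by rewrite expnSr mulnA.
Qed.

Lemma ordcm : #[c ^+ m] = (n %/ m)%N.
Proof. by rewrite orderXdiv Hc. Qed.

Lemma cm X : c ^+ (m * X) = c ^+ (m * (X %% (n %/ m))).
Proof. by rewrite !expgM -ordcm expg_mod_order. Qed.

Lemma cmE X Y : c ^+ (m * X) = c ^+ (m * Y) -> (X = Y %[mod n %/ m])%N.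
Proof. by rewrite !expgM => /eqP; rewrite eq_expg_mod_order ordcm => /eqP. Qed.


Lemma m0 : (0 < m)%N. Proof. by case: Hord. Qed.
Lemma N0 : (0 < n %/ m)%N.
Proof. by rewrite divn_gt0 ?m0 // dvdn_leq. Qed.

Lemma ar : a ^+ (r ^ m) = a.
Proof.
case: Hord => _ [hm _]; rewrite -expg_mod_order Ha hm modn_small ?expg1 //.
by case/andP: Hr => h1 h2; apply: leq_ltn_trans h2.
Qed.

Lemma exists_st : exists s t : nat,
  [/\ (s < n %/ m)%N, (t < n %/ m)%N, c * a = a ^+ r * c ^+ (1 + m * s)
    & c ^+ m * a = a * c ^+ (m * t)].
Proof.
case: (step1 1) => j [hj hjm]; rewrite muln1 in hj.
have hjn : (0 < j + n)%N by rewrite addn_gt0 Hn orbT.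
have hd : (m %| (j + n).-1)%N.
  rewrite -subn1 -eqn_mod_dvd // -modnDm hjm (eqP Hmn) addn0 modn_mod //.
have hc1 : c ^+ j = c ^+ (1 + m * ((j + n).-1 %/ m)).
  by rewrite mulnC divnK // add1n prednK // expgD -Hc expg_order mulg1.
case: (cpow m 1) => e [he hem].
have hde : (m %| e)%N by rewrite /dvdn hem modnn.
exists (((j + n).-1 %/ m) %% (n %/ m)), ((e %/ m) %% (n %/ m)); split.
- by rewrite ltn_pmod ?N0.
- by rewrite ltn_pmod ?N0.
- by rewrite hj hc1 !expgD -cm.
by move: he; rewrite expg1 muln1 ar => ->; rewrite -cm mulnC divnK.
Qed.


Lemma sum_shift (F : nat -> nat) x : (\sum_(1 <= i < x.+1) F i.-1 = \sum_(0 <= i < x) F i)%N.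
Proof. by rewrite big_add1. Qed.

Variables (s t : nat).
Hypotheses (R1 : c * a = a ^+ r * c ^+ (1 + m * s)) (R2 : c ^+ m * a = a * c ^+ (m * t)).

Lemma ak : a ^+ k = 1. Proof. by rewrite -Ha expg_order. Qed.
Lemma ark : a ^+ (r * k) = 1. Proof. by rewrite mulnC expgM ak expg1n. Qed.

Lemma condB : (s * \sum_(1 <= i < k.+1) t ^ i.-1 = 0 %[mod n %/ m])%N.
Proof.
rewrite sum_shift -/(Sg t k); apply: cmE; rewrite muln0 expg0.
have := L2 R1 R2 k; rewrite ak ark mulg1 mul1g expgD expg1 -{1}[c]mulg1 -mulnA.
by move/mulgI => <-.
Qed.

Lemma L4' i : c ^+ m * a ^+ i = a ^+ i * c ^+ (m * t ^ i).
Proof. by have := L4 R2 1 i; rewrite !muln1. Qed.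

Lemma tk : (t ^ k = 1 %[mod n %/ m])%N.
Proof. by apply: cmE; have := L4' k; rewrite ak mulg1 mul1g muln1 => <-. Qed.

Lemma tr : (t ^ r = t %[mod n %/ m])%N.
Proof.
apply: cmE.
have h1 : c ^+ m * (c * a) = a ^+ r * c ^+ (m * t ^ r) * c ^+ (1 + m * s).
  by rewrite R1 mulgA L4'.
have h2 : c ^+ m * (c * a) = a ^+ r * c ^+ (m * t) * c ^+ (1 + m * s).
  rewrite mulgA -expgSr expgS -mulgA R2 mulgA R1 -!mulgA -!expgD.
  by rewrite (addnC (1 + m * s)).
rewrite h1 -!mulgA in h2; move/mulgI: h2; exact: mulIg.
Qed.

Lemma condA : (t ^ r.-1 = 1 %[mod n %/ m])%N.
Proof.
apply: (modA _ _ tk tr); last exact: r0.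
by case/andP: Hr => h1 h2; apply: leq_ltn_trans h2.
Qed.

Lemma condC : (s * \sum_(1 <= i < m.+1) (\sum_(1 <= j < r.+1) t ^ j.-1) ^ i.-1
           + 1 = t %[mod n %/ m])%N.
Proof.
rewrite sum_shift.
under eq_bigr do rewrite sum_shift -/(Sg t r).
have h : c ^+ (Fe r m s t m 1) = c ^+ (m * t).
  have E := L3 R1 R2 m 1; rewrite muln1 ar expg1 R2 in E.
  by rewrite (mulgI _ _ _ E).
rewrite FeE in h.
have h' : c ^+ (m * (1 + s * \sum_(0 <= u < m) Sg t (r ^ u * 1))) = c ^+ (m * t).
  by rewrite -h mulnDr muln1 mulnA.
rewrite addnC -(cmE h'); apply: modD => //; apply: modM => //.
apply: modsum => u; rewrite muln1.
by rewrite (SgX _ tr).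
Qed.

Variable G : {group gT}.
Hypothesis HG : <[a]> * <[c]> = G.

Lemma memG g : g \in G -> exists i j, g = a ^+ i * c ^+ j.
Proof.
rewrite -HG => /mulsgP[u v /cycleP[i ->] /cycleP[j ->] ->]; by exists i, j.
Qed.

Lemma k0 : (0 < k)%N. Proof. by case/andP: Hr => h1 h2; apply: leq_ltn_trans h2. Qed.

Section Hom.
Variables (rT : finGroupType) (H : {group rT}) (x y : rT).
Hypotheses (HH : <[x]> <*> <[y]> = H) (Hx : x ^+ k = 1) (Hy : y ^+ n = 1)
  (S2 : y ^+ m * x = x * y ^+ (m * t)) (S1 : y * x = x ^+ r * y ^+ (1 + m * s)).

Definition f (g : gT) : rT :=
  if [pick ij : 'I_k * 'I_n | g == a ^+ ij.1 * c ^+ ij.2] is Some ij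
  then x ^+ ij.1 * y ^+ ij.2 else 1.

Lemma fE i j : f (a ^+ i * c ^+ j) = x ^+ i * y ^+ j.
Proof.
rewrite /f; case: pickP => [ij /eqP /esym /udec [hi hj]|].
  move/eqP: hi; rewrite eq_expg_mod_order Ha => /eqP hi.
  move/eqP: hj; rewrite eq_expg_mod_order Hc => /eqP hj.
  by rewrite -(expg_mod _ Hx) hi (expg_mod _ Hx) -(expg_mod _ Hy) hj (expg_mod _ Hy).
move/(_ (Ordinal (ltn_pmod i k0), Ordinal (ltn_pmod j Hn))) => /=.
by rewrite -[k in i %% k]Ha -[n in j %% n]Hc !expg_mod_order eqxx.
Qed.

Lemma fM : {in G &, {morph f : g h / g * h}}.
Proof.
move=> g h /memG[i [j ->]] /memG[u [v ->]].
have e1 : a ^+ i * c ^+ j * (a ^+ u * c ^+ v)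
   = a ^+ (i + r ^ j * u) * c ^+ (Fe r m s t j u + v).
  by rewrite mulgA -(mulgA _ (c ^+ j)) (L3 R1 R2) !mulgA -expgD -mulgA -expgD.
rewrite e1 !fE.
by rewrite expgD -!mulgA (mulgA (y ^+ j)) (L3 S1 S2) -!mulgA -expgD.
Qed.

Lemma homHG : H \homg G.
Proof.
apply/homgP; exists (Morphism fM).
apply/eqP; rewrite eqEsubset; apply/andP; split.
  apply/subsetP => _ /morphimP[g _ Gg ->] /=.
  case/memG: Gg => i [j ->]; rewrite fE -HH groupM // groupX // mem_gen // inE cycle_id ?orbT //.
rewrite -HH join_subG !cycle_subG; apply/andP; split.
  have -> : x = f (a ^+ 1 * c ^+ 0) by rewrite fE expg1 expg0 mulg1.
  by apply: mem_morphim => //; rewrite -HG mem_mulg // mem_cycle.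
have -> : y = f (a ^+ 0 * c ^+ 1) by rewrite fE expg1 expg0 mul1g.
by apply: mem_morphim => //; rewrite -HG mem_mulg // mem_cycle.
Qed.
End Hom.

End InG.

Theorem theorem1p2 (gT : finGroupType) (G : {group gT}) (a c : gT)
    (k r m n : nat) :
  (1 <= r < k)%N -> coprime r k ->
  is_mult_order k r m ->
  (0 < n)%N -> (m %| n)%N ->
  #[a] = k -> #[c] = n ->
  <[a]> :&: <[c]> = 1 ->
  <[a]> * <[c]> = G ->
  (* the skew-morphism of <[a]> determined by c is phi : a^i |-> a^(r i) *)
  (forall i : nat, exists j : nat, c * a ^+ i = a ^+ (r * i) * c ^+ j) ->
  exists s t : nat,
    [/\ (s < n %/ m)%N, (t < n %/ m)%N,
        t ^ r.-1 = 1 %[mod n %/ m],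
        (s * \sum_(1 <= i < k.+1) t ^ i.-1 = 0 %[mod n %/ m])%N &
        (s * \sum_(1 <= i < m.+1) (\sum_(1 <= j < r.+1) t ^ j.-1) ^ i.-1
           + 1 = t %[mod n %/ m])%N] /\
        [/\ a ^+ k = 1, c ^+ n = 1, c ^+ m * a = a * c ^+ (m * t)
          & c * a = a ^+ r * c ^+ (1 + m * s)] /\
        G \isog Grp (x : y : (x ^+ k, y ^+ n,
                              y ^+ m * x = x * y ^+ (m * t),
                              y * x = x ^+ r * y ^+ (1 + m * s))).
Proof.
move=> Hr Hco Hord Hn Hmn Ha Hc HI HG Hsk.
have [s [t [hs ht R1 R2]]] := exists_st Hr Hco Hord Hn Hmn Ha Hc HI Hsk.
exists s, t; split; [split|split].
- exact: hs.
- exact: ht.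
- exact: (condA Hr Hmn Ha Hc R1 R2).
- exact: (condB Hmn Ha Hc R1 R2).
- exact: (condC Hr Hord Hmn Ha Hc R1 R2).
- split; [exact: ak Ha | by rewrite -Hc expg_order | exact: R2 | exact: R1].
apply: intro_isoGrp.
  apply/existsP; exists (a, c); rewrite /= !xpair_eqE.
  apply/and5P; split; apply/eqP.
  - rewrite comm_joingE ?HG //; apply/comm_group_setP; rewrite HG; exact: groupP.
  - exact: ak Ha.
  - by rewrite -Hc expg_order.
  - exact: R2.
  - exact: R1.
move=> rT H /existsP[[x y]] /=; rewrite !xpair_eqE.
case/and5P=> /eqP HH /eqP Hx /eqP Hy /eqP S2 /eqP S1.
exact: (homHG Hr Hn Ha Hc HI R1 R2 HG HH Hx Hy S2 S1).
Qed.
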